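(* If the supply graph $G$ is a cycle and the demand digraph $H=(T,L)$ has at most two OD-pairs ($|L|\le 2$), then $(G,H)$ has the uniqueness property.
   Context: A supply graph is a finite undirected graph $G=(V,E)$ with directed version obtained by replacing each edge by two opposite arcs; a demand digraph is a simple digraph $H=(T,L)$ with $T\subseteq V$, whose arcs are OD-pairs; routes for $(o,d)\in L$ are directed $(o,d)$-paths in the directed version of $G$. Users (a bounded interval with Lebesgue measure, partitioned measurably by OD-pair) choose routes; flows are measures of users using each arc; each user has nonnegative continuous strictly increasing arc cost functions (measurable in the user); an equilibrium is a profile where every user takes a minimal-cost route. $(G,H)$ has the uniqueness property if for every measurable partition of users into OD-pairs and every such cost assignment, the flow on each arc is the same in all equilibria. *)

(* Defs.v *)
From HB Require Import structures.
From mathcomp Require Import all_boot all_order all_algebra.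
From mathcomp Require Import all_classical all_reals all_analysis.
Set Implicit Arguments. Unset Strict Implicit. Unset Printing Implicit Defensive.
Import Order.TTheory GRing.Theory Num.Theory numFieldNormedType.Exports.
Local Open Scope classical_set_scope.
Local Open Scope ring_scope.

(* A (simple) undirected supply graph is a symmetric irreflexive relation
   [adj] on a finite vertex type [V]; its directed version has an arc (u,v)
   for every ordered pair of adjacent vertices. *)

Definition route_arcs (V : eqType) (p : seq V) : seq (V * V) :=
  zip p (behead p).

Definition is_route (V : finType) (adj : rel V) (o d : V) (p : seq V) : Prop :=
  exists q, p = o :: q /\ path adj o q /\ last o q = d /\ uniq (o :: q).

Definition flow (R : realType) (V : finType) (I : set R) (sigma : R -> seq V)
  (e : V * V) : R :=
  fine (lebesgue_measure (I `&` [set x | e \in route_arcs (sigma x)])).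

Definition route_cost (R : realType) (V : finType) (c : R -> V * V -> R -> R)
  (x : R) (f : V * V -> R) (p : seq V) : R :=
  \sum_(e <- route_arcs p) c x e (f e).

Definition admissible_costs (R : realType) (V : finType) (I : set R)
  (c : R -> V * V -> R -> R) : Prop :=
  (forall x e, I x ->
     {within (`[0, +oo[%classic : set R), continuous (c x e)} /\
     (forall t, 0 <= t -> 0 <= c x e t) /\
     (forall s t, 0 <= s -> s < t -> c x e s < c x e t)) /\
  (forall e t, measurable_fun I (fun x => c x e t)).

Definition equilibrium (R : realType) (V : finType) (adj : rel V) (I : set R)
  (od : R -> V * V) (c : R -> V * V -> R -> R) (sigma : R -> seq V) : Prop :=
  (forall p, measurable (I `&` sigma @^-1` [set p])) /\
  (forall x, I x -> is_route adj (od x).1 (od x).2 (sigma x)) /\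
  (forall x q, I x -> is_route adj (od x).1 (od x).2 q ->
     route_cost c x (flow I sigma) (sigma x) <= route_cost c x (flow I sigma) q).

(* The uniqueness property of (G,H), with G given by [adj] and the arcs of
   the demand digraph H by [L]. Users form a bounded interval [a,b]. *)
Definition uniqueness_property (V : finType) (adj : rel V)
  (L : {set V * V}) : Prop :=
  forall (R : realType) (a b : R) (od : R -> V * V) (c : R -> V * V -> R -> R),
    let I : set R := `[a, b]%classic in
    (forall x, I x -> od x \in L) ->
    (forall l, measurable (I `&` od @^-1` [set l])) ->
    admissible_costs I c ->
    forall sigma1 sigma2,
      equilibrium adj I od c sigma1 -> equilibrium adj I od c sigma2 ->
      forall e, flow I sigma1 e = flow I sigma2 e.

Definition cycle_adj (n : nat) : rel 'I_n :=
  fun i j => (val j == (val i).+1 %% n)%N || (val i == (val j).+1 %% n)%N.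

(* Main.v *)
Require Import Defs.
From HB Require Import structures.
From mathcomp Require Import all_boot all_order all_algebra.
From mathcomp Require Import all_classical all_reals all_analysis.
From mathcomp Require Import zify ring lra.
Set Implicit Arguments. Unset Strict Implicit. Unset Printing Implicit Defensive.
Import Order.TTheory GRing.Theory Num.Theory numFieldNormedType.Exports.
Local Open Scope ring_scope.

Section Comb.
Variable n : nat.
Local Notation N := n.+3.
Local Notation Z := 'I_n.+3.

Lemma valZn (m : nat) : val (m%:R : Z) = (m %% N)%N.
Proof. by rewrite Zp_nat. Qed.

Lemma valZ_small (m : nat) : (m < N)%N -> val (m%:R : Z) = m.
Proof. by move=> h; rewrite valZn modn_small. Qed.

Lemma valN (x : Z) : x != 0 -> (val x + val (- x) = N)%N.
Proof.
move=> hx.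
have hx0 : (0 < nat_of_ord x)%N.
  rewrite lt0n; apply: contra hx => /eqP h; apply/eqP; apply/val_inj. by rewrite /= h.
have hxN := ltn_ord x.
rewrite /= modn_small; lia.
Qed.

Lemma adjE (i j : Z) : cycle_adj i j = (j == i + 1) || (j == i - 1).
Proof.
rewrite /cycle_adj; congr (_ || _).
  by rewrite -val_eqE /= modnDmr addn1.
by rewrite [RHS]eq_sym subr_eq -val_eqE /= modnDmr addn1.
Qed.

Definition walk (o s : Z) (m : nat) : seq Z := [seq o + i%:R * s | i <- iota 0 m.+1].

Lemma walk_rcons o s m : walk o s m.+1 = rcons (walk o s m) (o + m.+1%:R * s).
Proof. by rewrite /walk -[m.+2]addn1 iotaD map_cat /= cats1. Qed.

Lemma mem_walk o s m i : (i <= m)%N -> o + i%:R * s \in walk o s m.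
Proof. by move=> h; apply/mapP; exists i => //; rewrite mem_iota. Qed.

Lemma neigh (s u y : Z) : (s = 1 \/ s = -1) -> cycle_adj u y -> y = u + s \/ y = u - s.
Proof.
rewrite adjE => hs /orP [] /eqP ->; case: hs => ->.
- by left.
- by right; rewrite opprK.
- by right.
- by left.
Qed.

Lemma walk_ext o s (hs : s = 1 \/ s = -1) q m : (0 < m)%N ->
  uniq (walk o s m ++ q) -> path (@cycle_adj N) (o + m%:R * s) q ->
  walk o s m ++ q = walk o s (m + size q).
Proof.
elim: q m => [|y q IH] m hm hu.
  by rewrite cats0 addn0.
move=> /andP [hadj hp].
case: (neigh hs hadj) => hy.
- have e : y = o + m.+1%:R * s by rewrite hy -natr1 mulrDl mul1r addrA.
  have -> : (m + size (y :: q) = m.+1 + size q)%N by rewrite /= addSnnS.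
  have hp' : path (@cycle_adj N) (o + m.+1%:R * s) q by rewrite -e.
  rewrite -cat_rcons e -walk_rcons.
  apply: IH => //.
  by rewrite walk_rcons cat_rcons -e.
- exfalso; case: m hm hu hy {hadj IH} => [//|m] _ hu hy.
  have e : y = o + m%:R * s by rewrite hy -natr1 mulrDl mul1r addrA addrK.
  move: hu; rewrite cat_uniq => /and3P [_ /hasPn H _].
  have := H y; rewrite inE eqxx /= => /(_ isT).
  by rewrite e mem_walk.
Qed.

Lemma walk_size_lt o s m : uniq (walk o s m) -> (m < N)%N.
Proof.
move=> hu.
have := uniq_leq_size hu (fun x _ => mem_enum 'I_N x).
by rewrite size_map size_iota size_enum_ord.
Qed.

Lemma last_walk x o s m : last x (walk o s m) = o + m%:R * s.
Proof.
case: m => [|m]; first by rewrite /walk /=.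
by rewrite walk_rcons last_rcons.
Qed.

Definition Rp (l : Z * Z) := walk l.1 1 (val (l.2 - l.1)).
Definition Rm (l : Z * Z) := walk l.1 (-1) (val (l.1 - l.2)).

Lemma route_cases o d p : is_route (@cycle_adj N) o d p -> p = Rp (o, d) \/ p = Rm (o, d).
Proof.
case=> q [-> [hp [hl hu]]].
case: q hp hl hu => [|y q] hp hl hu.
  left; rewrite /= in hl; subst d; rewrite /Rp subrr /walk /=.
  by rewrite mul0r addr0.
have hs : exists2 s : Z, (s = 1 \/ s = -1) & y = o + s.
  move: hp => /= /andP [hadj _].
  case: (neigh (or_introl erefl) hadj) => ->.
    by exists 1; [left|].
  by exists (-1); [right|].
case: hs => s hs hy.
have ew : o :: y :: q = walk o s 1 ++ q.
  by rewrite /walk /= mul0r addr0 mul1r hy.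
have hu' : uniq (walk o s 1 ++ q) by rewrite -ew.
have hp' : path (@cycle_adj N) (o + 1%:R * s) q.
  by move: hp => /= /andP [_]; rewrite mul1r -hy.
have E := walk_ext hs (isT : (0 < 1)%N) hu' hp'.
rewrite ew E.
set M := (1 + size q)%N.
have hM : (M < N)%N by apply: (walk_size_lt (o := o) (s := s)); rewrite -E -ew.
have hd : d = o + M%:R * s.
  by rewrite -hl -(last_walk o o s M) -E -ew.
case: hs => hs; subst s.
- left; rewrite /Rp; congr walk; change (M = val (d - o)).
  by rewrite hd mulr1 (addrC o) addrK valZ_small.
- right; rewrite /Rm; congr walk; change (M = val (o - d)).
  by rewrite hd mulrN1 opprB addrC subrK valZ_small.
Qed.

Lemma zip_iota (f : nat -> Z) k m :
  zip (map f (iota k m.+1)) (map f (iota k.+1 m)) = [seq (f i, f i.+1) | i <- iota k m].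
Proof.
elim: m k => [|m IH] k; first by [].
by rewrite [iota k _]/= [iota k.+1 _]/= /= IH.
Qed.

Lemma arcs_walk o s m : route_arcs (walk o s m) =
  [seq (o + i%:R * s, o + i.+1%:R * s) | i <- iota 0 m].
Proof. by rewrite /route_arcs /walk [iota 0 _]/= /= (zip_iota (fun i => o + i%:R * s) 0 m). Qed.

Lemma mem_arcs o s m e : e \in route_arcs (walk o s m) ->
  exists2 i, (i < m)%N & e = (o + i%:R * s, o + i.+1%:R * s).
Proof.
rewrite arcs_walk => /mapP [i]; rewrite mem_iota add0n => /andP [_ hi] ->.
by exists i.
Qed.

Lemma arcs_mem o s m i : (i < m)%N ->
  (o + i%:R * s, o + i.+1%:R * s) \in route_arcs (walk o s m).
Proof.
by move=> h; rewrite arcs_walk; apply: (map_f (fun i => (o + i%:R * s, o + i.+1%:R * s))); rewrite mem_iota.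
Qed.

Lemma two_neq0 : (1 + 1 : Z) != 0.
Proof. by rewrite -val_eqE. Qed.

Lemma pairE (A B : Type) (a b : A) (c d : B) : (a, c) = (b, d) -> a = b /\ c = d.
Proof. by case=> -> ->. Qed.

Lemma fwd_bwd o m o' m' e : e \in route_arcs (walk o 1 m) ->
  e \in route_arcs (walk o' (-1) m') -> False.
Proof.
move=> /mem_arcs [i _ ->] /mem_arcs [j _] E; case: (pairE E) => h1.
rewrite !mulr1 !mulrN1 in h1 *; rewrite -!natr1.
rewrite addrA h1 opprD addrA => /addrI h.
by move: two_neq0; rewrite {2}h subrr eqxx.
Qed.

Lemma RpE o d : Rp (o, d) = walk o 1 (val (d - o)). Proof. by []. Qed.
Lemma RmE o d : Rm (o, d) = walk o (-1) (val (o - d)). Proof. by []. Qed.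

Lemma pair_eq (l l' : Z * Z) : l.1 != l.2 ->
  (forall e, e \in route_arcs (Rp l) -> e \in route_arcs (Rp l')) ->
  (forall e, e \in route_arcs (Rm l) -> e \in route_arcs (Rm l')) -> l = l'.
Proof.
case: l => o d; case: l' => o' d' /= hod; rewrite !RpE !RmE => Hp Hm.
set k := val (d - o); set j := val (o - d).
set k' := val (d' - o'); set j' := val (o' - d').
have hkj : (k + j = N)%N.
  rewrite /k /j -(opprB d o) valN // subr_eq0 eq_sym //.
have hk0 : (0 < k)%N.
  rewrite lt0n; apply/eqP => h; move/eqP: hod; apply.
  apply/eqP; rewrite eq_sym -subr_eq0; apply/eqP/val_inj; exact: h.
have hkN : (k < N)%N := ltn_ord (d - o).
have hjN : (j < N)%N := ltn_ord (o - d).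
have hk'N : (k' < N)%N := ltn_ord (d' - o').
have hj'N : (j' < N)%N := ltn_ord (o' - d').
have hj0 : (0 < j)%N by lia.
have := Hp _ (arcs_mem o 1 hk0) => /mem_arcs [i1 hi1 E1]; case: (pairE E1) => e1 _.
have := Hm _ (arcs_mem o (-1) hj0) => /mem_arcs [i2 hi2 E2]; case: (pairE E2) => e2 _.
have hneq : o' != d'.
  by apply/eqP => h; move: hi1; rewrite h subrr.
have hkj' : (k' + j' = N)%N.
  rewrite /k' /j' -(opprB d' o') valN // subr_eq0 eq_sym //.
have hoo : o = o'.
  move: e1 e2; rewrite !mul0r !addr0 mulr1 mulrN1 => -> h0.
  have h1 : i1%:R = - i2%:R :> Z by apply: (addrI o').
  move/eqP: h1; rewrite -addr_eq0 -natrD => /eqP h.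
  rewrite -/k' in hi1; rewrite -/j' in hi2.
  have := valZ_small (m := (i1 + i2)%N) ltac:(lia); rewrite h => h'.
  have -> : i1 = 0%N by move: h'; rewrite /=; lia.
  by rewrite addr0.
subst o'.
have hd1 : o + k%:R = d by rewrite /k natr_Zp addrC subrK.
have hd2 : o - j%:R = d by rewrite /j natr_Zp opprB addrC subrK.
have hk1 : (k.-1 < k)%N by lia.
have hj1 : (j.-1 < j)%N by lia.
have := Hp _ (arcs_mem o 1 hk1) => /mem_arcs [i3 hi3 E3]; case: (pairE E3) => _.
rewrite !mulr1 (prednK hk0) hd1 => e3; rewrite -/k' in hi3.
have := Hm _ (arcs_mem o (-1) hj1) => /mem_arcs [i4 hi4 E4]; case: (pairE E4) => _.
rewrite !mulrN1 (prednK hj0) hd2 => e4; rewrite -/j' in hi4.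
have hkk : k = i3.+1.
  rewrite /k e3 (addrC o) addrK valZ_small //; lia.
have hjj : j = i4.+1.
  rewrite /j e4 opprB addrC subrK valZ_small //; lia.
have hkk' : k = k' by lia.
have : d - o = d' - o by apply: val_inj.
by move/addIr => ->.
Qed.

End Comb.

Local Open Scope classical_set_scope.

Section Meas.
Variables (R : realType) (a b : R) (V : finType) (od : R -> V * V) (s1 s2 : R -> seq V).
Let I : set R := `[a, b]%classic.
Hypothesis hod : forall l, measurable (I `&` od @^-1` [set l]).
Hypothesis hs1 : forall p, measurable (I `&` s1 @^-1` [set p]).
Hypothesis hs2 : forall p, measurable (I `&` s2 @^-1` [set p]).

Definition M (Q : V * V -> seq V -> seq V -> Prop) : R :=
  fine (lebesgue_measure (I `&` [set x | Q (od x) (s1 x) (s2 x)])).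

Lemma measQ Q : measurable (I `&` [set x | Q (od x) (s1 x) (s2 x)]).
Proof.
pose F := fun k : nat =>
  match @unpickle ((V * V) * seq V * seq V)%type k with
  | Some t => if `[< Q t.1.1 t.1.2 t.2 >] then
      (I `&` od @^-1` [set t.1.1]) `&` (I `&` s1 @^-1` [set t.1.2])
         `&` (I `&` s2 @^-1` [set t.2])
      else set0
  | None => set0 end.
have -> : I `&` [set x | Q (od x) (s1 x) (s2 x)] = \bigcup_k F k.
  apply/seteqP; split => x.
  - move=> [Ix Qx]; exists (pickle (od x, s1 x, s2 x)) => //.
    rewrite /F pickleK /=; case: asboolP => // _.
  - move=> [k _]; rewrite /F; case: unpickle => [[[l p] q]|] //=.
    case: asboolP => // Hq [[[Ix Hl] [_ Hp]] [_ Hq']].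
    by split => //; rewrite /= Hl Hp Hq'.
apply: bigcupT_measurable => k; rewrite /F; case: unpickle => [t|]; last exact: measurable0.
case: asboolP => _; last exact: measurable0.
by apply: measurableI; [apply: measurableI|].
Qed.

Lemma measI : measurable I.
Proof. exact: measurable_itv. Qed.

Lemma fin_Q Q : lebesgue_measure (I `&` [set x | Q (od x) (s1 x) (s2 x)]) \is a fin_num.
Proof.
rewrite ge0_fin_numE ?measure_ge0 //.
apply: (@le_lt_trans _ _ (lebesgue_measure I)).
  apply: le_measure; rewrite ?inE; [exact: measQ|exact: measI|].
  by apply: subIsetl.
rewrite /I lebesgue_measure_itv /=.
by case: ifP => _; rewrite -?EFinD ltry.
Qed.

Lemma M_ge0 Q : 0 <= M Q.
Proof. by apply: fine_ge0; apply: measure_ge0. Qed.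

Lemma M_split Q B : M Q = M (fun l p q => Q l p q /\ B l p q) + M (fun l p q => Q l p q /\ ~ B l p q).
Proof.
have E : lebesgue_measure (I `&` [set x | Q (od x) (s1 x) (s2 x)]) =
  (lebesgue_measure (I `&` [set x | Q (od x) (s1 x) (s2 x) /\ B (od x) (s1 x) (s2 x)]) +
   lebesgue_measure (I `&` [set x | Q (od x) (s1 x) (s2 x) /\ ~ B (od x) (s1 x) (s2 x)]))%E.
  rewrite -(measureU lebesgue_measure (measQ (fun l p q => Q l p q /\ B l p q))
      (measQ (fun l p q => Q l p q /\ ~ B l p q))).
    congr (lebesgue_measure _); apply/seteqP; split => x /=.
      move=> [Ix Qx]; case: (pselect (B (od x) (s1 x) (s2 x))) => h; [left|right]; by split.
    by move=> [[Ix [Qx _]]|[Ix [Qx _]]].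
  by apply/seteqP; split => x // [[_ [_ h1]] [_ [_ h2]]].
rewrite /M E; exact: (fineD (fin_Q (fun l p q => Q l p q /\ B l p q)) (fin_Q (fun l p q => Q l p q /\ ~ B l p q))).
Qed.

Lemma M_ext Q Q' : (forall x, I x -> (Q (od x) (s1 x) (s2 x) <-> Q' (od x) (s1 x) (s2 x))) ->
  M Q = M Q'.
Proof.
move=> H; rewrite /M; congr (fine (lebesgue_measure _)).
by apply/seteqP; split => x [Ix h]; split => //; apply/(H x Ix).
Qed.

Lemma M_zero Q : (forall x, I x -> ~ Q (od x) (s1 x) (s2 x)) -> M Q = 0.
Proof.
move=> H; rewrite /M (_ : _ `&` _ = set0) ?measure0 //.
by apply/seteqP; split => x // [Ix h]; exact: (H x Ix h).
Qed.

Lemma M_pos Q : 0 < M Q -> exists x, I x /\ Q (od x) (s1 x) (s2 x).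
Proof.
move=> h; apply: contrapT => hn.
have := @M_zero Q (fun x Ix hq => hn (ex_intro _ x (conj Ix hq))).
by move=> e; rewrite e ltxx in h.
Qed.

Lemma M_splitb Q (B : V * V -> seq V -> seq V -> bool) :
  M Q = \sum_(k : bool) M (fun l p q => Q l p q /\ B l p q = k).
Proof.
rewrite big_bool /= (M_split Q (fun l p q => B l p q)).
congr (_ + _); apply: M_ext => x _; split.
- by move=> [h1 /negP/negbTE h2]; split.
- by move=> [h1 h2]; split => //; rewrite h2.
Qed.

Variables (Rp Rm : V * V -> seq V) (l1 l2 : V * V).
Hypothesis hvalid : forall x, I x -> [/\ od x = l1 \/ od x = l2,
  s1 x = Rp (od x) \/ s1 x = Rm (od x) & s2 x = Rp (od x) \/ s2 x = Rm (od x)].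

Definition lsel (k : bool) := if k then l1 else l2.
Definition Rsel (u : bool) l := if u then Rp l else Rm l.
Definition cell (k u v : bool) : V * V -> seq V -> seq V -> Prop :=
  fun l p q => [/\ (l == l1) = k, (p == Rp l) = u & (q == Rp l) = v].

Lemma cell_val x k u v : I x -> cell k u v (od x) (s1 x) (s2 x) ->
  [/\ od x = lsel k, s1 x = Rsel u (lsel k) & s2 x = Rsel v (lsel k)].
Proof.
move=> Ix [hk hu hv]; case: (hvalid Ix) => hl h1 h2.
have el : od x = lsel k.
  case: k hk => /= hk; first exact/eqP.
  by case: hl => // h; rewrite h eqxx in hk.
split => //; rewrite -el.
- case: u hu => /= hu; first exact/eqP.
  by case: h1 => // h; rewrite h eqxx in hu.
- case: v hv => /= hv; first exact/eqP.
  by case: h2 => // h; rewrite h eqxx in hv.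
Qed.

Lemma M_decomp Q : M Q = \sum_(k : bool) \sum_(u : bool) \sum_(v : bool)
  M (fun l p q => Q l p q /\ cell k u v l p q).
Proof.
rewrite (M_splitb Q (fun l p q => l == l1)); apply: eq_bigr => k _.
rewrite (M_splitb _ (fun l p q => p == Rp l)); apply: eq_bigr => u _.
rewrite (M_splitb _ (fun l p q => q == Rp l)); apply: eq_bigr => v _.
apply: M_ext => x _; rewrite /cell; split.
  by move=> [[[? ?] ?] ?].
by move=> [? [? ? ?]].
Qed.

Lemma M_w1 e k u v : M (fun l p q => e \in route_arcs p /\ cell k u v l p q) =
  (e \in route_arcs (Rsel u (lsel k)))%:R * M (cell k u v).
Proof.
case E: (e \in route_arcs (Rsel u (lsel k))).
- rewrite mul1r; apply: M_ext => x Ix; split; first by case.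
  move=> hc; split => //; case: (cell_val Ix hc) => _ -> _; exact: E.
- rewrite mul0r; apply: M_zero => x Ix [he hc]; case: (cell_val Ix hc) => _ h _.
  by rewrite h E in he.
Qed.

Lemma M_w2 e k u v : M (fun l p q => e \in route_arcs q /\ cell k u v l p q) =
  (e \in route_arcs (Rsel v (lsel k)))%:R * M (cell k u v).
Proof.
case E: (e \in route_arcs (Rsel v (lsel k))).
- rewrite mul1r; apply: M_ext => x Ix; split; first by case.
  move=> hc; split => //; case: (cell_val Ix hc) => _ _ ->; exact: E.
- rewrite mul0r; apply: M_zero => x Ix [he hc]; case: (cell_val Ix hc) => _ _ h.
  by rewrite h E in he.
Qed.

Definition sg e k : R := (e \in route_arcs (Rp (lsel k)))%:R - (e \in route_arcs (Rm (lsel k)))%:R.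
Definition D k := M (cell k true false) - M (cell k false true).

Lemma formula e : flow I s1 e - flow I s2 e = sg e true * D true + sg e false * D false.
Proof.
have -> : flow I s1 e = M (fun l p q => e \in route_arcs p) by [].
have -> : flow I s2 e = M (fun l p q => e \in route_arcs q) by [].
rewrite !M_decomp !big_bool !M_w1 !M_w2 /sg /D /=.
ring.
Qed.

End Meas.


Lemma sum_le (V : eqType) (R : realType) (s : seq V) (F G : V -> R) :
  (forall e, e \in s -> F e <= G e) -> \sum_(e <- s) F e <= \sum_(e <- s) G e.
Proof. by move=> H; rewrite big_seq [X in _ <= X]big_seq; apply: ler_sum. Qed.

Lemma sum_le_eq (V : eqType) (R : realType) (s : seq V) (F G : V -> R) :
  (forall e, e \in s -> F e <= G e) -> \sum_(e <- s) F e = \sum_(e <- s) G e ->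
  forall e, e \in s -> F e = G e.
Proof.
elim: s => [//|y s IH] H; rewrite !big_cons => E e.
have hy : F y <= G y by apply: H; rewrite inE eqxx.
have hs : \sum_(e <- s) F e <= \sum_(e <- s) G e.
  by apply: sum_le => i hi; apply: H; rewrite inE hi orbT.
have ey : F y = G y by lra.
have es : \sum_(e <- s) F e = \sum_(e <- s) G e by lra.
rewrite inE => /orP [/eqP -> //|he].
by apply: IH => // i hi; apply: H; rewrite inE hi orbT.
Qed.

Lemma core (V : eqType) (R : realType) (cx : V * V -> R -> R) (f1 f2 : V * V -> R)
  (P Q : seq V) :
  (forall e s t, 0 <= s -> s < t -> cx e s < cx e t) ->
  (forall e, 0 <= f1 e) -> (forall e, 0 <= f2 e) ->
  \sum_(e <- route_arcs P) cx e (f1 e) <= \sum_(e <- route_arcs Q) cx e (f1 e) ->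
  \sum_(e <- route_arcs Q) cx e (f2 e) <= \sum_(e <- route_arcs P) cx e (f2 e) ->
  (forall e, e \in route_arcs P -> f2 e <= f1 e) ->
  (forall e, e \in route_arcs Q -> f1 e <= f2 e) ->
  (forall e, e \in route_arcs P -> f1 e = f2 e) /\
  (forall e, e \in route_arcs Q -> f1 e = f2 e).
Proof.
move=> hc h1 h2 eq1 eq2 hP hQ.
have mono e s t : 0 <= s -> s <= t -> cx e s <= cx e t.
  move=> hs; rewrite le_eqVlt => /orP [/eqP -> //|hst]; exact/ltW/hc.
have inj e s t : 0 <= s -> 0 <= t -> cx e s = cx e t -> s = t.
  move=> hs ht E; case: (ltgtP s t) => // hst.
    by have := hc e _ _ hs hst; rewrite E ltxx.
  by have := hc e _ _ ht hst; rewrite E ltxx.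
have AP : \sum_(e <- route_arcs P) cx e (f2 e) <= \sum_(e <- route_arcs P) cx e (f1 e).
  by apply: sum_le => e he; apply: mono; [exact: h2|exact: hP].
have AQ : \sum_(e <- route_arcs Q) cx e (f1 e) <= \sum_(e <- route_arcs Q) cx e (f2 e).
  by apply: sum_le => e he; apply: mono; [exact: h1|exact: hQ].
have EP : \sum_(e <- route_arcs P) cx e (f2 e) = \sum_(e <- route_arcs P) cx e (f1 e) by lra.
have EQ : \sum_(e <- route_arcs Q) cx e (f1 e) = \sum_(e <- route_arcs Q) cx e (f2 e) by lra.
split => e he.
- apply: inj; [exact: h1|exact: h2|]; symmetry.
  apply: (sum_le_eq _ EP) => // i hi; apply: mono; [exact: h2|exact: hP].
- apply: inj; [exact: h1|exact: h2|].
  apply: (sum_le_eq _ EQ) => // i hi; apply: mono; [exact: h1|exact: hQ].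
Qed.

Lemma sgb (R : realType) (p q : bool) (x t : R) :
  `|x| <= t -> - t <= ((p : nat)%:R - (q : nat)%:R) * x <= t.
Proof.
rewrite ler_norml => /andP [h1 h2].
case: p; case: q => /=; rewrite ?mulr1n ?mulr0n ?subrr ?mul0r ?subr0 ?mul1r ?sub0r ?mulN1r;
  apply/andP; split; lra.
Qed.

Lemma two_labels (T : finType) (L : {set T}) (x0 y0 : T) : x0 != y0 -> (#|L| <= 2)%N ->
  exists l1 l2, l1 != l2 /\ forall l, l \in L -> l = l1 \/ l = l2.
Proof.
move=> hxy hc.
case: (ltnP 1 #|L|) => h.
  have /cards2P [x [y [hne ->]]] : #|L| == 2%N by rewrite eqn_leq hc h.
  by exists x, y; split => // l; rewrite in_set2 => /orP [] /eqP ->; [left|right].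
have /card_le1_eqP H := h.
case: (pickP (mem L)) => [z hz|hn].
  exists z, (if z == x0 then y0 else x0); split.
    by case: ifP => [/eqP ->|/negbT].
  by move=> l hl; left; apply: H.
exists x0, y0; split => // l hl.
by move: (hn l); rewrite /= hl.
Qed.

Lemma route_cases' n (l : 'I_n.+3 * 'I_n.+3) p :
  is_route (@cycle_adj n.+3) l.1 l.2 p -> p = Rp l \/ p = Rm l.
Proof. by case: l => o d; apply: route_cases. Qed.

Lemma RpRm n (l l' : 'I_n.+3 * 'I_n.+3) e :
  e \in route_arcs (Rp l) -> e \in route_arcs (Rm l') -> False.
Proof. exact: fwd_bwd. Qed.

Theorem corollary1 (n : nat) (L : {set 'I_n * 'I_n}) :
  leq 3 n ->
  (forall l, l \in L -> l.1 != l.2) ->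
  leq #|L| 2 ->
  uniqueness_property (@cycle_adj n) L.
Proof.
case: n L => [|[|[|n]]] L // _ hL hcard.
move=> R a b od c I hodL hodm [hcx hcm] s1 s2 [hm1 [hr1 he1]] [hm2 [hr2 he2]] e.
have h01 : ((0, 0) : 'I_n.+3 * 'I_n.+3) != (0, 1).
  by apply/negP => /eqP E; case: (pairE E) => _ /eqP; rewrite -val_eqE.
have [l1 [l2 [hl12 hLl]]] := two_labels h01 hcard.
have hvalid : forall x, I x -> [/\ od x = l1 \/ od x = l2,
    s1 x = Rp (od x) \/ s1 x = Rm (od x) & s2 x = Rp (od x) \/ s2 x = Rm (od x)].
  move=> x Ix; split; first exact: hLl (hodL x Ix).
    exact: route_cases' (hr1 x Ix).
  exact: route_cases' (hr2 x Ix).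
have F := formula hodm hm1 hm2 hvalid.
set DD := D a b od s1 s2 (@Rp n) l1.
set SG := sg R (@Rp n) (@Rm n) l1 l2.
set f1 := flow I s1; set f2 := flow I s2.
have F' : forall k e, f1 e - f2 e = SG e k * DD k + SG e (~~ k) * DD (~~ k).
  by case=> e0; rewrite F //= addrC.
have f1ge0 : forall e, 0 <= f1 e by move=> e0; apply: fine_ge0; apply: measure_ge0.
have f2ge0 : forall e, 0 <= f2 e by move=> e0; apply: fine_ge0; apply: measure_ge0.
have key : forall k, `|DD (~~ k)| <= `|DD k| -> DD k = 0.
  move=> k hle.
  set lk := lsel l1 l2 k; set lk' := lsel l1 l2 (~~ k).
  have fin : (forall e, e \in route_arcs (Rp lk) -> f1 e = f2 e) ->
             (forall e, e \in route_arcs (Rm lk) -> f1 e = f2 e) -> lk.1 != lk.2 -> DD k = 0.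
    move=> zp zm hne; apply: contrapT => hD.
    have : lk = lk'.
      apply: pair_eq hne _ _.
      - move=> e0 he0; apply: contrapT => /negP/negbTE hn.
        have := F' k e0; rewrite (zp e0 he0) subrr /SG /sg -/lk -/lk' he0 hn.
        have -> : (e0 \in route_arcs (Rm lk)) = false by apply/negP => /(RpRm he0).
        have -> : (e0 \in route_arcs (Rm lk')) = false by apply/negP => /(RpRm he0).
        by rewrite /= subrr mul0r addr0 subr0 mul1r => /esym.
      - move=> e0 he0; apply: contrapT => /negP/negbTE hn.
        have := F' k e0; rewrite (zm e0 he0) subrr /SG /sg -/lk -/lk' he0 hn.
        have -> : (e0 \in route_arcs (Rp lk)) = false by apply/negP => /RpRm /(_ he0).
        have -> : (e0 \in route_arcs (Rp lk')) = false by apply/negP => /RpRm /(_ he0).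
        rewrite /= subrr mul0r addr0 sub0r mulN1r => /esym/eqP.
        by rewrite oppr_eq0 => /eqP.
    rewrite /lk /lk'; case: (k) => /= h.
      by move: hl12; rewrite h eqxx.
    by move: hl12; rewrite h eqxx.
  have hb : forall e0, - `|DD k| <= SG e0 (~~ k) * DD (~~ k) <= `|DD k|.
    by move=> e0; apply: sgb.
  case: (ltgtP (DD k) 0) => hD; last by [].
  -
    have hpos : 0 < M a b od s1 s2 (cell (@Rp n) l1 k false true).
      have := M_ge0 a b od s1 s2 (cell (@Rp n) l1 k true false).
      rewrite /DD /D in hD; lra.
    have [x [Ix hx]] := M_pos hpos.
    have [hox h1x h2x] := cell_val hvalid Ix hx.
    rewrite /= -/lk in hox h1x h2x.
    have hnk : `|DD k| = - DD k by rewrite ltr0_norm.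
    have [zp zm] : (forall e, e \in route_arcs (Rm lk) -> f1 e = f2 e) /\
                   (forall e, e \in route_arcs (Rp lk) -> f1 e = f2 e).
      apply: (core (cx := c x)).
      - by move=> e0 s t; case: (hcx x e0 Ix) => _ [_]; apply.
      - exact: f1ge0.
      - exact: f2ge0.
      - have := he1 x (Rp lk) Ix; rewrite -h1x; apply.
        by move: (hr2 x Ix); rewrite h2x hox.
      - have := he2 x (Rm lk) Ix; rewrite -h2x; apply.
        by move: (hr1 x Ix); rewrite h1x hox.
      - move=> e0 he0; rewrite -subr_ge0 (F' k e0) /SG /sg -/lk he0.
        have -> : (e0 \in route_arcs (Rp lk)) = false by apply/negP => /RpRm /(_ he0).
        have := hb e0; rewrite /SG /sg -/lk' hnk /= => /andP [hb1 hb2].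
        lra.
      - move=> e0 he0; rewrite -subr_ge0.
        have := F' k e0; rewrite /SG /sg -/lk he0.
        have -> : (e0 \in route_arcs (Rm lk)) = false by apply/negP => /(RpRm he0).
        have := hb e0; rewrite /SG /sg -/lk' hnk /= => /andP [hb1 hb2].
        lra.
    have hne : lk.1 != lk.2 by rewrite -hox; apply: hL; apply: hodL.
    exact: fin zm zp hne.
  -
    have hpos : 0 < M a b od s1 s2 (cell (@Rp n) l1 k true false).
      have := M_ge0 a b od s1 s2 (cell (@Rp n) l1 k false true).
      rewrite /DD /D in hD; lra.
    have [x [Ix hx]] := M_pos hpos.
    have [hox h1x h2x] := cell_val hvalid Ix hx.
    rewrite /= -/lk in hox h1x h2x.
    have hnk : `|DD k| = DD k by rewrite gtr0_norm.
    have [zp zm] : (forall e, e \in route_arcs (Rp lk) -> f1 e = f2 e) /\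
                   (forall e, e \in route_arcs (Rm lk) -> f1 e = f2 e).
      apply: (core (cx := c x)).
      - by move=> e0 s t; case: (hcx x e0 Ix) => _ [_]; apply.
      - exact: f1ge0.
      - exact: f2ge0.
      - have := he1 x (Rm lk) Ix; rewrite -h1x; apply.
        by move: (hr2 x Ix); rewrite h2x hox.
      - have := he2 x (Rp lk) Ix; rewrite -h2x; apply.
        by move: (hr1 x Ix); rewrite h1x hox.
      - move=> e0 he0; rewrite -subr_ge0 (F' k e0) /SG /sg -/lk he0.
        have -> : (e0 \in route_arcs (Rm lk)) = false by apply/negP => /(RpRm he0).
        have := hb e0; rewrite /SG /sg -/lk' hnk /= => /andP [hb1 hb2].
        lra.
      - move=> e0 he0; rewrite -subr_ge0.
        have := F' k e0; rewrite /SG /sg -/lk he0.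
        have -> : (e0 \in route_arcs (Rp lk)) = false by apply/negP => /RpRm /(_ he0).
        have := hb e0; rewrite /SG /sg -/lk' hnk /= => /andP [hb1 hb2].
        lra.
    have hne : lk.1 != lk.2 by rewrite -hox; apply: hL; apply: hodL.
    exact: fin zp zm hne.
have hD : DD true = 0 /\ DD false = 0.
  case: (leP `|DD false| `|DD true|) => h.
    have h1 := key true h; split => //.
    move: h; rewrite h1 normr0 => h.
    by apply/normr0_eq0; apply/eqP; rewrite eq_le h normr_ge0.
  have h2 := key false (ltW h); split => //.
  by move: h; rewrite h2 normr0 normr_lt0.
apply/eqP; rewrite -subr_eq0; apply/eqP.
case: hD => h1 h2.
by rewrite (F' true e) h1 (_ : DD (~~ true) = 0) // !mulr0 addr0.
Qed.
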